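(* Let $\mathbf{V}$ be a finite set of random variables containing a target variable $T$, and let $\mathbf{F} = \mathbf{V} \setminus \{T\}$ be the set of features. Suppose the joint distribution $P$ of $\mathbf{V}$ can be faithfully represented by a Bayesian network, and suppose the algorithm PFBP (described in the context) has access to a conditional independence oracle for $P$ and imposes no limit on the number of selected features. Then PFBP run with two Runs returns the Markov blanket of $T$.
   Context: Notation: $\mathbf{X} \perp T \mid \mathbf{S}$ denotes conditional independence of $\mathbf{X}$ and $T$ given $\mathbf{S}$ under $P$. A Markov blanket of $T$ with respect to $\mathbf{V}$ is a minimal set $\mathbf{S} \subseteq \mathbf{F}$ such that $(\mathbf{V}\setminus(\mathbf{S}\cup\{T\})) \perp T \mid \mathbf{S}$; for distributions faithful to a Bayesian network it is unique. A Bayesian network is a pair $\langle G, P\rangle$ with $G$ a DAG over $\mathbf{V}$ satisfying the Markov condition (each variable is independent of its non-descendants given its parents); $P$ is faithful to $G$ if all and only the conditional independencies of $P$ are those entailed by the Markov condition (equivalently, by d-separation in $G$); $P$ can be faithfully represented by a Bayesian network if such a $G$ exists. The PFBP algorithm with an independence oracle (Parallel Forward-Backward with Pruning, with Early Dropping) operates as follows. Initially the selected set is $\mathbf{S} = \emptyset$. It performs Runs, up to a maximum number maxRuns of Runs, stopping early if a Run leaves $\mathbf{S}$ unchanged. Each Run consists of: (1) set the remaining set $\mathbf{R} = \mathbf{F} \setminus \mathbf{S}$; (2) forward phase: repeat iterations in which every $X \in \mathbf{R}$ with $X \perp T \mid \mathbf{S}$ is removed from $\mathbf{R}$ (Early Dropping),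 and then, if some $X \in \mathbf{R}$ is conditionally dependent on $T$ given $\mathbf{S}$, one such variable (the best-ranked one) is added to $\mathbf{S}$ and removed from $\mathbf{R}$; the forward phase ends when no variable is added; (3) backward phase: repeatedly, if some $X \in \mathbf{S}$ satisfies $X \perp T \mid \mathbf{S}\setminus\{X\}$, remove one such variable from $\mathbf{S}$; stop when no variable can be removed. The output is $\mathbf{S}$. *)

(* Defs.v *)
From mathcomp Require Import all_boot.
Set Implicit Arguments. Unset Strict Implicit. Unset Printing Implicit Defensive.

Section DSep.
Variable V : finType.
Variable edge : rel V.

Definition acyclic : Prop := forall x y, edge x y -> ~~ connect edge y x.

Definition adj : rel V := fun a b => edge a b || edge b a.

Definition collider (a b c : V) : bool := edge a b && edge c b.

Definition triple_active (Z : {set V}) (a b c : V) : bool :=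
  if collider a b c then [exists d in Z, connect edge b d]
  else b \notin Z.

Fixpoint triples_active (Z : {set V}) (a b : V) (rest : seq V) : bool :=
  match rest with
  | [::] => true
  | c :: rest' => triple_active Z a b c && triples_active Z b c rest'
  end.

Definition active_path (Z : {set V}) (x : V) (p : seq V) : bool :=
  [&& path adj x p, uniq (x :: p) &
      (if p is b :: rest then triples_active Z x b rest else true)].

Definition d_connected (Z : {set V}) (x y : V) : Prop :=
  exists p, active_path Z x p /\ last x p = y.

Definition d_separated (X Y Z : {set V}) : Prop :=
  forall x y, x \in X -> y \in Y -> ~ d_connected Z x y.
End DSep.

(* Indep X Y Z  stands for  X _||_ Y | Z  under P (the CI oracle).      *)
Section PFBP.
Variable V : finType.
Variable T : V.
Variable Indep : {set V} -> {set V} -> {set V} -> bool.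

(* P can be faithfully represented by a Bayesian network: there is a DAG G
   whose d-separation statements are exactly the CI statements of P
   (Markov condition + faithfulness), for disjoint triples. *)
Definition faithful_BN : Prop :=
  exists edge : rel V, acyclic edge /\
    forall X Y Z : {set V},
      [disjoint X & Y] -> [disjoint X & Z] -> [disjoint Y & Z] ->
      (Indep X Y Z <-> d_separated edge X Y Z).

Definition features : {set V} := ~: [set T].

Definition ci (X : V) (S : {set V}) : bool := Indep [set X] [set T] S.

Definition mb_property (S : {set V}) : bool :=
  Indep (~: (T |: S)) [set T] S.

Definition markov_blanket (S : {set V}) : Prop :=
  [/\ S \subset features, mb_property S &
      forall S' : {set V}, S' \proper S -> ~~ mb_property S'].

Definition early_drop (S R : {set V}) : {set V} := [set X in R | ~~ ci X S].

(* The choice of the added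
   variable (the "best-ranked" one) is arbitrary: all choices are covered. *)
Inductive forward : {set V} -> {set V} -> {set V} -> Prop :=
| fwd_stop (S R : {set V}) : early_drop S R = set0 -> forward S R S
| fwd_add (S R : {set V}) (X : V) (Sout : {set V}) :
    X \in early_drop S R ->
    forward (X |: S) (early_drop S R :\ X) Sout -> forward S R Sout.

(* backward phase, again with arbitrary choice of the removed variable *)
Inductive backward : {set V} -> {set V} -> Prop :=
| bwd_stop (S : {set V}) : (forall X, X \in S -> ~~ ci X (S :\ X)) -> backward S S
| bwd_remove (S : {set V}) (X : V) (Sout : {set V}) :
    X \in S -> ci X (S :\ X) -> backward (S :\ X) Sout -> backward S Sout.

Definition run (S S' : {set V}) : Prop :=
  exists S1, forward S (features :\: S) S1 /\ backward S1 S'.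

Fixpoint pfbp (n : nat) (S Sout : {set V}) : Prop :=
  match n with
  | 0 => Sout = S
  | n'.+1 => exists S', run S S' /\
      (if S' == S then Sout = S else pfbp n' S' Sout)
  end.
End PFBP.

(* Main.v *)
Require Import Defs.
From mathcomp Require Import all_boot.
Set Implicit Arguments. Unset Strict Implicit. Unset Printing Implicit Defensive.

Section Proof.
Variable V : finType.
Variable T : V.
Variable Indep : {set V} -> {set V} -> {set V} -> bool.
Variable edge : rel V.
Hypothesis Hacyc : acyclic edge.
Hypothesis Hfaith : forall X Y Z : {set V},
      [disjoint X & Y] -> [disjoint X & Z] -> [disjoint Y & Z] ->
      (Indep X Y Z <-> d_separated edge X Y Z).

Definition PC := [set y | adj edge y T].
Definition MB := [set y | (y != T) && (adj edge y T || [exists c, edge T c && edge y c])].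

Lemma no_loop x : ~~ edge x x.
Proof. by apply/negP => H; move: (Hacyc H); rewrite connect0. Qed.

Lemma no_2cycle x y : edge x y -> ~~ edge y x.
Proof. by move=> Hxy; apply/negP => Hyx; move: (Hacyc Hyx); rewrite connect1. Qed.

Lemma PC_MB : PC \subset MB.
Proof.
apply/subsetP => y; rewrite !inE => Hy; rewrite Hy andbT.
apply/eqP => E; subst y; move: Hy; rewrite /adj orbb.
by apply/negP; apply: no_loop.
Qed.
Lemma PC_neq y : y \in PC -> y != T.
Proof. by move/(subsetP PC_MB); rewrite inE => /andP[]. Qed.

Lemma MB_feat : MB \subset features T.
Proof. by apply/subsetP => y; rewrite !inE => /andP[]. Qed.

Lemma Qlem (Z : {set V}) : MB \subset Z -> forall rest a b,
  triples_active edge Z a b rest -> path (adj edge) a (b :: rest) ->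
  uniq (a :: b :: rest) -> last b rest = T ->
  (a \in Z) && ((rest == [::]) || edge a b).
Proof.
move=> HMZ; elim=> [|c rest IH] a b /=.
  move=> _ /andP[Hab _] Hu Eb; subst b.
  rewrite ?eqxx ?orbT ?andbT; apply: (subsetP HMZ); rewrite inE Hab andbT.
  by move: Hu; rewrite !inE andbT.
move=> /andP[Htr Hts] /andP[Hab Hp] Hu Hl.
have Hu' : uniq [:: b, c & rest] by move: Hu => /= /andP[].
case/andP: (IH b c Hts Hp Hu' Hl) => HbZ Hor.
move: Htr; rewrite /triple_active; case Hcol: (collider edge a b c); last by rewrite HbZ.
move=> _; case/andP: Hcol => Heab Hecb.
case/orP: Hor => [/eqP Er|Hebc]; last by move: (no_2cycle Hebc); rewrite Hecb.
subst rest; move: Hl => /= Ec; subst c.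
rewrite Heab ?orbT andbT; apply: (subsetP HMZ); rewrite inE.
apply/andP; split; first by move: Hu; rewrite !inE => /andP[/norP[_ ]].
by apply/orP; right; apply/existsP; exists b; rewrite Hecb Heab.
Qed.

Lemma dsep (Z : {set V}) x : MB \subset Z -> x \notin Z -> x != T ->
  ~ d_connected edge Z x T.
Proof.
move=> HMZ HxZ HxT [p [Hact Hl]].
case: p Hact Hl => [|b rest]; first by move=> _ /= E; move: HxT; rewrite E eqxx.
move=> /and3P[Hp Hu Htr] Hl.
by case/andP: (Qlem HMZ Htr Hp Hu Hl) => Hx _; move: HxZ; rewrite Hx.
Qed.

Lemma dconn (Z : {set V}) y : y != T -> y \notin Z -> T \notin Z ->
  (adj edge y T \/ exists c, [/\ edge T c, edge y c & c \in Z]) ->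
  d_connected edge Z y T.
Proof.
move=> HyT HyZ HTZ [Hadj|[c [HTc Hyc HcZ]]].
  exists [:: T]; split=> //; rewrite /active_path /= Hadj /= !inE HyT.
  done.
exists [:: c; T]; split=> //; rewrite /active_path /=.
have Hyc' : y != c by apply/negP => /eqP E; move: Hyc; rewrite E (negbTE (no_loop c)).
have HcT : c != T by apply/negP => /eqP E; move: HTc; rewrite E (negbTE (no_loop T)).
rewrite /adj Hyc HTc !orbT /= !inE negb_or Hyc' HyT HcT /=.
rewrite /triple_active /collider Hyc HTc /=.
by rewrite andbT; apply/existsP; exists c; rewrite HcZ connect0.
Qed.

Lemma ci_iff (Z : {set V}) y : y != T -> y \notin Z -> T \notin Z ->
  (ci T Indep y Z <-> ~ d_connected edge Z y T).
Proof.
move=> HyT HyZ HTZ; rewrite /ci.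
have D1 : [disjoint [set y] & [set T]].
  by rewrite disjoint_subset; apply/subsetP => z; rewrite !inE => /eqP ->.
have D2 : [disjoint [set y] & Z].
  by rewrite disjoint_subset; apply/subsetP => z; rewrite !inE => /eqP ->.
have D3 : [disjoint [set T] & Z].
  by rewrite disjoint_subset; apply/subsetP => z; rewrite !inE => /eqP ->.
case: (Hfaith D1 D2 D3) => H1 H2; split.
  by move/H1 => H; apply: H; rewrite inE.
by move=> H; apply: H2 => x z; rewrite !inE => /eqP -> /eqP ->.
Qed.

Lemma mb_dep (Z : {set V}) y : y \in MB -> y \notin Z -> T \notin Z ->
  PC :\ y \subset Z -> ~~ ci T Indep y Z.
Proof.
move=> HyM HyZ HTZ HPZ; apply/negP => /(ci_iff _ _ _).
move: HyM; rewrite inE => /andP[HyT Hor].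
case/(_ HyT HyZ HTZ); apply: dconn => //.
case/orP: Hor => [H|/existsP[c /andP[HTc Hyc]]]; first by left.
right; exists c; split=> //; apply: (subsetP HPZ); rewrite !inE /adj HTc orbT andbT.
by apply/negP => /eqP E; move: Hyc; rewrite E (negbTE (no_loop y)).
Qed.

Lemma pc_dep (Z : {set V}) y : y \in PC -> y \notin Z -> T \notin Z ->
  ~~ ci T Indep y Z.
Proof.
move=> HyP HyZ HTZ; apply/negP => /(ci_iff (PC_neq HyP) HyZ HTZ); apply.
by apply: dconn => //; [exact: PC_neq | left; move: HyP; rewrite inE].
Qed.

Lemma mb_indep (Z : {set V}) y : MB \subset Z -> y \notin Z -> y != T ->
  T \notin Z -> ci T Indep y Z.
Proof. by move=> HMZ HyZ HyT HTZ; apply/(ci_iff HyT HyZ HTZ); apply: dsep. Qed.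

Lemma featT (S : {set V}) : S \subset features T -> T \notin S.
Proof. by move=> HS; apply/negP => /(subsetP HS); rewrite !inE eqxx. Qed.

Lemma ed_sub S R : early_drop T Indep S R \subset R.
Proof. by apply/subsetP => z; rewrite inE => /andP[]. Qed.

Lemma fwd_feat S R Sout : forward T Indep S R Sout ->
  S \subset features T -> R \subset features T -> Sout \subset features T.
Proof.
elim=> // {}S {}R X {}Sout HX _ IH HS HR; apply: IH.
  rewrite subUset HS andbT sub1set.
  by apply: (subsetP HR); apply: (subsetP (ed_sub S R)).
apply: subset_trans HR; apply: subset_trans (ed_sub S R); exact: subD1set.
Qed.

Lemma fwd_keep (K : {set V}) S R Sout : forward T Indep S R Sout ->
  (forall (S' : {set V}) y, S \subset S' -> T \notin S' -> y \in K -> y \notin S' ->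
     ~~ ci T Indep y S') ->
  K \subset S :|: R -> T \notin S -> R \subset features T -> K \subset Sout.
Proof.
elim=> [{}S {}R Hed|{}S {}R X {}Sout HX _ IH] H HK HTS HR.
  apply/subsetP => y Hy; case/setUP: (subsetP HK y Hy) => // HyR.
  case HyS: (y \in S) => //.
  have : y \in early_drop T Indep S R.
    by rewrite inE HyR /=; apply: H => //; rewrite HyS.
  by rewrite Hed inE.
have HXR : X \in R by apply: (subsetP (ed_sub S R)).
apply: IH.
- move=> S' y HS' HT' Hy Hy'; apply: H => //.
  by apply: subset_trans HS'; apply: subsetUr.
- apply/subsetP => y Hy; case/setUP: (subsetP HK y Hy) => HyS.
    by rewrite !inE HyS orbT.
  case E: (y == X); first by rewrite !inE E.
  case HyS': (y \in S); first by rewrite !inE HyS' orbT.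
  rewrite !inE E /= HyS /= HyS' /=; apply: H => //; by rewrite HyS'.
- rewrite !inE negb_or HTS andbT; apply/eqP => E.
  by move: (subsetP HR X HXR); rewrite E !inE eqxx.
- apply: subset_trans HR; apply: subset_trans (ed_sub S R); exact: subD1set.
Qed.

Lemma bwd_sub S Sout : backward T Indep S Sout -> Sout \subset S.
Proof.
elim=> // {}S X {}Sout _ _ _ IH.
by apply: subset_trans IH _; apply: subD1set.
Qed.

Lemma bwd_keep (K : {set V}) S Sout : backward T Indep S Sout ->
  K \subset S ->
  (forall (S' : {set V}) y, S' \subset S -> K \subset S' -> y \in K ->
     ~~ ci T Indep y (S' :\ y)) -> K \subset Sout.
Proof.
elim=> // {}S X {}Sout HX Hci _ IH HK H.
have HXK : X \notin K.
  by apply/negP => HXK; move: (H S X (subxx _) HK HXK); rewrite Hci.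
apply: IH.
  apply/subsetP => y Hy; rewrite !inE (subsetP HK y Hy) andbT.
  by apply/eqP => E; move: HXK; rewrite -E Hy.
move=> S' y HS' HK' Hy; apply: H => //.
by apply: subset_trans HS' _; apply: subD1set.
Qed.

Lemma bwd_MB S Sout : backward T Indep S Sout ->
  MB \subset S -> S \subset features T -> Sout = MB.
Proof.
elim=> [{}S H|{}S X {}Sout HX Hci _ IH] HM HS.
  apply/eqP; rewrite eqEsubset HM andbT; apply/subsetP => X HX.
  case HXM: (X \in MB) => //.
  have HXT : X != T by move: (subsetP HS X HX); rewrite !inE.
  have := H X HX; rewrite mb_indep //.
  - apply/subsetP => y Hy; rewrite !inE (subsetP HM y Hy) andbT.
    by apply/eqP => E; move: HXM; rewrite -E Hy.
  - by rewrite !inE eqxx.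
  - by rewrite !inE negb_and featT ?orbT.
have HXM : X \notin MB.
  apply/negP => HXM; move: Hci; apply/negP; apply: mb_dep => //.
  - by rewrite !inE eqxx.
  - by rewrite !inE negb_and featT ?orbT.
  - apply: setSD; apply: subset_trans HM; exact: PC_MB.
apply: IH.
  apply/subsetP => y Hy; rewrite !inE (subsetP HM y Hy) andbT.
  by apply/eqP => E; move: HXM; rewrite -E Hy.
by apply: subset_trans HS; apply: subD1set.
Qed.

Lemma runA S S' : run T Indep S S' -> S \subset features T -> PC \subset S -> S' = MB.
Proof.
case=> S1 [Hf Hb] HS HP.
have HTS := featT HS.
have HRf : features T :\: S \subset features T by apply: subsetDl.
apply: (bwd_MB Hb); last exact: fwd_feat Hf HS HRf.
apply: (fwd_keep Hf) => //.
- move=> S'' y HS'' HT'' Hy Hy''; apply: mb_dep => //.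
  apply: subset_trans (subD1set _ _) _; exact: subset_trans HP HS''.
- apply/subsetP => y Hy; rewrite !inE.
  by case: (y \in S) => //=; move: (subsetP MB_feat y Hy); rewrite !inE.
Qed.

Lemma run1 S' : run T Indep set0 S' -> PC \subset S' /\ S' \subset features T.
Proof.
case=> S1 [Hf Hb].
have HRf : features T :\: set0 \subset features T by apply: subsetDl.
have HS1 : S1 \subset features T by apply: fwd_feat Hf _ HRf; apply: sub0set.
split; last exact: subset_trans (bwd_sub Hb) HS1.
have HP : PC \subset S1.
  apply: (fwd_keep Hf).
  - by move=> S'' y _ HT'' Hy Hy''; apply: pc_dep.
  - apply/subsetP => y Hy; rewrite !inE.
    by move: (PC_neq Hy); rewrite orbC => ->.
  - by rewrite inE.
  - done.
apply: (bwd_keep Hb) => // S'' y HS'' _ Hy; apply: pc_dep => //.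
- by rewrite !inE eqxx.
- by rewrite !inE negb_and featT ?orbT //; apply: subset_trans HS'' HS1.
Qed.

Lemma MB_mb : markov_blanket T Indep MB.
Proof.
have Dgen : forall (S : {set V}), T \notin S ->
  [/\ [disjoint ~: (T |: S) & [set T]], [disjoint ~: (T |: S) & S]
    & [disjoint [set T] & S]].
  move=> S HTS; split; rewrite disjoint_subset; apply/subsetP => z; rewrite !inE.
  - by rewrite negb_or => /andP[].
  - by rewrite negb_or => /andP[].
  - by move/eqP ->.
have HTM : T \notin MB by apply: featT; exact: MB_feat.
split; first exact: MB_feat.
  case: (Dgen _ HTM) => D1 D2 D3; apply/(proj2 (Hfaith D1 D2 D3)).
  move=> x z; rewrite in_setC in_setU1 negb_or => /andP[HxT HxM]; rewrite inE => /eqP ->.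
  by apply: dsep.
move=> S' /properP [HS' [y HyM HyS']].
have HTS' : T \notin S' by apply/negP => /(subsetP HS'); rewrite (negbTE HTM).
case: (Dgen _ HTS') => D1 D2 D3; apply/negP => /(proj1 (Hfaith D1 D2 D3)) Hd.
move: (HyM); rewrite inE => /andP[HyT /orP[Hadj|/existsP[c /andP[HTc Hyc]]]].
  by apply: (Hd y T); [rewrite !inE negb_or HyT | rewrite inE | apply: dconn => //; left].
case HcS: (c \in S').
  apply: (Hd y T); [by rewrite !inE negb_or HyT | by rewrite inE | ].
  by apply: dconn => //; right; exists c.
have HcT : c != T by apply/negP => /eqP E; move: HTc; rewrite E (negbTE (no_loop T)).
apply: (Hd c T); [by rewrite !inE negb_or HcT HcS | by rewrite inE | ].
by apply: dconn => //; [rewrite HcS | left; rewrite /adj HTc orbT].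
Qed.
End Proof.

Lemma fwd_ex (V : finType) (T : V) Indep (S R : {set V}) :
  exists Sout, forward T Indep S R Sout.
Proof.
have [n Hn] : exists n, #|R| <= n by exists #|R|.
elim: n S R Hn => [|n IH] S R Hn.
  exists S; apply: fwd_stop; apply/eqP; rewrite -subset0.
  apply: subset_trans (ed_sub _ _ _ _) _.
  by move: Hn; rewrite leqn0 cards_eq0 => /eqP ->.
case E: (early_drop T Indep S R == set0); first by exists S; apply: fwd_stop; apply/eqP.
case/set0Pn: (negbT E) => X HX.
have Hlt : #|early_drop T Indep S R :\ X| <= n.
  have := cardsD1 X (early_drop T Indep S R); rewrite HX add1n => H.
  have := subset_leq_card (ed_sub T Indep S R); rewrite H => H2.
  by rewrite -ltnS; apply: leq_trans H2 Hn.
have [Sout HS] := IH (X |: S) _ Hlt.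
by exists Sout; apply: fwd_add HX HS.
Qed.

Lemma bwd_ex (V : finType) (T : V) Indep (S : {set V}) :
  exists Sout, backward T Indep S Sout.
Proof.
have [n Hn] : exists n, #|S| <= n by exists #|S|.
elim: n S Hn => [|n IH] S Hn.
  exists S; apply: bwd_stop => X.
  by move: Hn; rewrite leqn0 cards_eq0 => /eqP ->; rewrite inE.
case: (pickP (fun X => (X \in S) && ci T Indep X (S :\ X))) => [X /andP[HX Hci]|H].
  have Hlt : #|S :\ X| <= n by move: Hn; rewrite (cardsD1 X S) HX add1n ltnS.
  have [Sout HS] := IH (S :\ X) Hlt.
  by exists Sout; apply: bwd_remove HX Hci HS.
exists S; apply: bwd_stop => X HX; move: (H X); rewrite HX /= => ->; done.
Qed.

Lemma run_ex (V : finType) (T : V) Indep (S : {set V}) :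
  exists S', run T Indep S S'.
Proof.
have [S1 Hf] := fwd_ex T Indep S (features T :\: S).
have [S2 Hb] := bwd_ex T Indep S1.
by exists S2, S1.
Qed.

Theorem theorem1 (V : finType) (T : V)
    (Indep : {set V} -> {set V} -> {set V} -> bool) :
  faithful_BN Indep ->
  (exists Sout, pfbp T Indep 2 set0 Sout) /\
  (forall Sout, pfbp T Indep 2 set0 Sout -> markov_blanket T Indep Sout).
Proof.
case=> edge [Hacyc Hfaith]; split.
  have [S1 H1] := run_ex T Indep set0.
  case E: (S1 == set0).
    by exists set0; exists S1; rewrite E.
  have [S2 H2] := run_ex T Indep S1.
  exists (if S2 == S1 then S1 else S2); exists S1; rewrite E; split=> //.
  exists S2; split=> //; case: (S2 == S1) => //.
move=> Sout /= [S1 [H1 Hif]].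
have [HP HF] := run1 Hacyc Hfaith H1.
case E: (S1 == set0) Hif => /=.
  move=> ->; move/eqP: E => E; subst S1.
  have -> : set0 = MB T edge by apply: (runA Hacyc Hfaith H1); [exact: sub0set | exact: HP].
  exact: MB_mb.
case=> S2 [H2 Hif2].
have HM2 : S2 = MB T edge by apply: (runA Hacyc Hfaith H2).
case E2: (S2 == S1) Hif2 => ->.
  by move/eqP: E2 => <-; rewrite HM2; apply: MB_mb.
by rewrite HM2; apply: MB_mb.
Qed.
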